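(* Let $X$ be a normal space and let $\mathfrak{P}$ be realcompactness. Then $\lambda_\mathfrak{P}X=\beta X\setminus\mathrm{cl}_{\beta X}(\upsilon X\setminus X)$.
   Context: All spaces are completely regular Hausdorff. $\beta X$ is the Stone–Čech compactification and $\upsilon X\subseteq\beta X$ the Hewitt realcompactification of $X$. A space is realcompact if it is homeomorphic to a closed subspace of a power of $\mathbb{R}$. $\mathrm{Coz}(X)$ is the set of cozero-sets $X\setminus f^{-1}(0)$, $f:X\to[0,1]$ continuous. For a topological property $\mathfrak{P}$, $\lambda_\mathfrak{P}X=\bigcup\{\mathrm{int}_{\beta X}\mathrm{cl}_{\beta X}C: C\in\mathrm{Coz}(X),\ \mathrm{cl}_XC\text{ has }\mathfrak{P}\}$. *)

(* Defs.v *)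
From Stdlib Require Import Reals List.
Open Scope R_scope.

Definition is_topology {T : Type} (op : (T -> Prop) -> Prop) : Prop :=
  op (fun _ => True) /\ op (fun _ => False) /\
  (forall U V, op U -> op V -> op (fun x => U x /\ V x)) /\
  (forall F : (T -> Prop) -> Prop, (forall U, F U -> op U) ->
     op (fun x => exists U, F U /\ U x)).

Definition closed {T : Type} (op : (T -> Prop) -> Prop) (A : T -> Prop) : Prop :=
  op (fun x => ~ A x).

Definition closure {T : Type} (op : (T -> Prop) -> Prop) (A : T -> Prop) : T -> Prop :=
  fun x => forall U, op U -> U x -> exists y, U y /\ A y.

Definition interior {T : Type} (op : (T -> Prop) -> Prop) (A : T -> Prop) : T -> Prop :=
  fun x => exists U, op U /\ U x /\ forall y, U y -> A y.

Definition R_open (U : R -> Prop) : Prop :=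
  forall x, U x -> exists eps, 0 < eps /\ forall y, Rabs (y - x) < eps -> U y.

Definition continuous {X Y : Type} (opX : (X -> Prop) -> Prop)
  (opY : (Y -> Prop) -> Prop) (f : X -> Y) : Prop :=
  forall V, opY V -> opX (fun x => V (f x)).

Definition continuous_R {X : Type} (opX : (X -> Prop) -> Prop) (f : X -> R) : Prop :=
  continuous opX R_open f.

Definition subspace_open {T : Type} (op : (T -> Prop) -> Prop) (A : T -> Prop)
  : ({x : T | A x} -> Prop) -> Prop :=
  fun V => forall y, V y -> exists U, op U /\ U (proj1_sig y) /\
             forall z : {x : T | A x}, U (proj1_sig z) -> V z.

Definition product_open (I : Type) : ((I -> R) -> Prop) -> Prop :=
  fun W => forall x, W x -> exists (l : list I) (eps : R), 0 < eps /\
             forall y, (forall i, In i l -> Rabs (y i - x i) < eps) -> W y.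

Definition embedding {X Y : Type} (opX : (X -> Prop) -> Prop)
  (opY : (Y -> Prop) -> Prop) (h : X -> Y) : Prop :=
  (forall x y, h x = h y -> x = y) /\ continuous opX opY h /\
  (forall U, opX U -> exists W, opY W /\ forall x, U x <-> W (h x)).

Definition realcompact {T : Type} (op : (T -> Prop) -> Prop) : Prop :=
  exists (I : Type) (h : T -> (I -> R)),
    embedding op (product_open I) h /\
    closed (product_open I) (fun y => exists x, h x = y).

Definition hausdorff {T : Type} (op : (T -> Prop) -> Prop) : Prop :=
  forall x y : T, x <> y -> exists U V, op U /\ op V /\ U x /\ V y /\
    forall z, ~ (U z /\ V z).

Definition completely_regular {T : Type} (op : (T -> Prop) -> Prop) : Prop :=
  forall (A : T -> Prop) (x : T), closed op A -> ~ A x ->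
    exists f, continuous_R op f /\ (forall y, 0 <= f y <= 1) /\
      f x = 0 /\ forall y, A y -> f y = 1.

Definition normal_space {T : Type} (op : (T -> Prop) -> Prop) : Prop :=
  forall A B : T -> Prop, closed op A -> closed op B ->
    (forall z, ~ (A z /\ B z)) ->
    exists U V, op U /\ op V /\ (forall z, A z -> U z) /\ (forall z, B z -> V z) /\
      forall z, ~ (U z /\ V z).

Definition compact {T : Type} (op : (T -> Prop) -> Prop) : Prop :=
  forall F : (T -> Prop) -> Prop, (forall U, F U -> op U) ->
    (forall x, exists U, F U /\ U x) ->
    exists l : list (T -> Prop), (forall U, In U l -> F U) /\
      forall x, exists U, In U l /\ U x.

Definition stone_cech {X K : Type} (opX : (X -> Prop) -> Prop)
  (opK : (K -> Prop) -> Prop) (e : X -> K) : Prop :=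
  is_topology opK /\ compact opK /\ hausdorff opK /\ embedding opX opK e /\
  (forall p, closure opK (fun q => exists x, e x = q) p) /\
  (forall f, continuous_R opX f -> (exists M, forall x, Rabs (f x) <= M) ->
     exists g, continuous_R opK g /\ forall x, g (e x) = f x).

Definition cozero {X : Type} (opX : (X -> Prop) -> Prop) (C : X -> Prop) : Prop :=
  exists f, continuous_R opX f /\ (forall x, 0 <= f x <= 1) /\
    forall x, C x <-> f x <> 0.

(* Hewitt realcompactification inside beta X: the points p of beta X such that
   every zero-set of beta X containing p meets X. *)
Definition upsilon {X K : Type} (opX : (X -> Prop) -> Prop)
  (opK : (K -> Prop) -> Prop) (e : X -> K) : K -> Prop :=
  fun p => forall g, continuous_R opK g -> g p = 0 -> exists x, g (e x) = 0.

Definition lambdaP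
  (P : forall T : Type, ((T -> Prop) -> Prop) -> Prop)
  {X K : Type} (opX : (X -> Prop) -> Prop) (opK : (K -> Prop) -> Prop)
  (e : X -> K) : K -> Prop :=
  fun p => exists C : X -> Prop, cozero opX C /\
    P {x : X | closure opX C x} (subspace_open opX (closure opX C)) /\
    interior opK (closure opK (fun q => exists x, C x /\ e x = q)) p.

Definition realcompactP : forall T : Type, ((T -> Prop) -> Prop) -> Prop :=
  fun T op => realcompact op.

(* Main.v *)
From Stdlib Require Import Reals List Lra Lia Classical FunctionalExtensionality PropExtensionality ProofIrrelevance IndefiniteDescription.
Require Import Defs.
Open Scope R_scope.

Definition em_inf (P : Prop) : {P} + {~ P}.
Proof.
  destruct (constructive_indefinite_description (fun b : bool => if b then P else ~ P)) as [[|] H].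
  - destruct (classic P); [exists true|exists false]; auto.
  - left; auto.
  - right; auto.
Defined.


Lemma Rabs_cases (a : R) : (0 <= a /\ Rabs a = a) \/ (a < 0 /\ Rabs a = - a).
Proof.
  destruct (Rle_or_lt 0 a) as [H|H].
  - left; split; auto; apply Rabs_pos_eq; auto.
  - right; split; auto; apply Rabs_left; auto.
Qed.

Ltac sabs := repeat match goal with
  | |- context [Rabs ?a] =>
      let H := fresh in destruct (Rabs_cases a) as [[? H]|[? H]]; rewrite H in *; clear H
  | H0 : context [Rabs ?a] |- _ =>
      let H := fresh in destruct (Rabs_cases a) as [[? H]|[? H]]; rewrite H in *; clear H
  end.

Lemma pred_ext {T} (P Q : T -> Prop) : (forall x, P x <-> Q x) -> P = Q.
Proof. intros H; apply functional_extensionality; intros x; apply propositional_extensionality; auto. Qed.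

Lemma open_local {T} (op : (T->Prop)->Prop) : is_topology op -> forall P,
  (forall x, P x -> exists W, op W /\ W x /\ forall y, W y -> P y) -> op P.
Proof.
  intros [_ [_ [_ Hu]]] P H.
  assert (E : P = fun x => exists U, (op U /\ forall y, U y -> P y) /\ U x).
  { apply pred_ext; intros x; split.
    - intros Px; destruct (H x Px) as [W [HW [Wx Hs]]]; exists W; auto.
    - intros [U [[_ HU] Ux]]; auto. }
  rewrite E; apply Hu; tauto.
Qed.

Lemma op_inter {T} (op : (T->Prop)->Prop) : is_topology op -> forall U V, op U -> op V ->
  op (fun x => U x /\ V x).
Proof. intros [_ [_ [H _]]]; auto. Qed.

Lemma op_True {T} (op : (T->Prop)->Prop) : is_topology op -> op (fun _ => True).
Proof. intros [H _]; auto. Qed.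

Lemma open_compl_closure {T} (op : (T->Prop)->Prop) (H: is_topology op) (S : T -> Prop) :
  op (fun x => ~ closure op S x).
Proof.
  apply open_local; auto. intros x Hx. unfold closure in Hx.
  apply not_all_ex_not in Hx as [U HU].
  apply imply_to_and in HU as [oU HU]. apply imply_to_and in HU as [Ux HU].
  exists U; split; [auto|split; [auto|]]. intros y Uy Hcl. apply HU. apply Hcl; auto.
Qed.

Lemma closed_closure {T} (op : (T->Prop)->Prop) (H: is_topology op) (S : T -> Prop) :
  closed op (closure op S).
Proof. unfold closed; apply open_compl_closure; auto. Qed.

Lemma closed_compl {T} (op : (T->Prop)->Prop) (U : T -> Prop) : op U -> closed op (fun x => ~ U x).
Proof.
  intros HU; unfold closed.
  replace (fun x => ~ ~ U x) with U; auto.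
  apply pred_ext; intros x; split; intros; [intro; auto | apply NNPP; auto].
Qed.

Lemma closure_incl {T} (op : (T->Prop)->Prop) (S : T -> Prop) x : S x -> closure op S x.
Proof. intros Sx U _ Ux; exists x; auto. Qed.

Lemma closure_mono {T} (op : (T->Prop)->Prop) (S S' : T -> Prop) :
  (forall x, S x -> S' x) -> forall x, closure op S x -> closure op S' x.
Proof. intros H x Hx U oU Ux. destruct (Hx U oU Ux) as [y [Uy Sy]]; eauto. Qed.

Lemma closure_closed {T} (op : (T->Prop)->Prop) (A : T -> Prop) :
  closed op A -> forall x, closure op A x -> A x.
Proof.
  intros cA x Hx. apply NNPP; intro nA. destruct (Hx _ cA nA) as [y [ny Ay]]; auto.
Qed.

Lemma closure_idem {T} (op : (T->Prop)->Prop) (H : is_topology op) (S : T -> Prop) x :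
  closure op (closure op S) x -> closure op S x.
Proof. apply closure_closed, closed_closure; auto. Qed.

Lemma R_open_ball c eps : R_open (fun t => Rabs (t - c) < eps).
Proof.
  intros t Ht. exists (eps - Rabs (t - c)); split; [lra|].
  intros y Hy. sabs; lra.
Qed.

Lemma R_open_gt c : R_open (fun t => c < t).
Proof. intros t Ht. exists (t - c); split; [lra|]. intros y Hy; sabs; lra. Qed.

Lemma R_open_lt c : R_open (fun t => t < c).
Proof. intros t Ht. exists (c - t); split; [lra|]. intros y Hy; sabs; lra. Qed.

Lemma R_open_neq c : R_open (fun t => t <> c).
Proof.
  intros t Ht. exists (Rabs (t - c)); split.
  - apply Rabs_pos_lt; lra.
  - intros y Hy E; subst; sabs; lra.
Qed.

Lemma cont_preimage {T} (op : (T->Prop)->Prop) f V :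
  continuous_R op f -> R_open V -> op (fun x => V (f x)).
Proof. intros Hf HV; apply Hf; auto. Qed.

Lemma cont_intro {T} (op : (T->Prop)->Prop) (f : T -> R) : is_topology op ->
  (forall x eps, 0 < eps -> exists W, op W /\ W x /\ forall y, W y -> Rabs (f y - f x) < eps) ->
  continuous_R op f.
Proof.
  intros Ht H V HV. apply open_local; auto. intros x Vfx.
  destruct (HV _ Vfx) as [d [dpos Hd]]. destruct (H x d dpos) as [W [oW [Wx HW]]].
  exists W; repeat split; auto.
Qed.

Lemma cont_elim {T} (op : (T->Prop)->Prop) (f : T -> R) : continuous_R op f ->
  forall x eps, 0 < eps -> exists W, op W /\ W x /\ forall y, W y -> Rabs (f y - f x) < eps.
Proof.
  intros Hf x eps He. exists (fun y => Rabs (f y - f x) < eps); repeat split.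
  - apply (cont_preimage op f (fun t => Rabs (t - f x) < eps)); auto. apply R_open_ball.
  - replace (f x - f x) with 0 by ring. rewrite Rabs_R0; auto.
  - auto.
Qed.

Lemma cont_const {T} (op : (T->Prop)->Prop) c : is_topology op -> continuous_R op (fun _ => c).
Proof.
  intros Ht. apply cont_intro; auto. intros x eps He. exists (fun _ => True); repeat split; auto.
  apply op_True; auto. intros; replace (c - c) with 0 by ring; rewrite Rabs_R0; auto.
Qed.

Lemma cont_comp_lip {T} (op : (T->Prop)->Prop) (g : T -> R) (phi : R -> R) L :
  is_topology op -> continuous_R op g -> 0 <= L ->
  (forall a b, Rabs (phi a - phi b) <= L * Rabs (a - b)) -> continuous_R op (fun x => phi (g x)).
Proof.
  intros Ht Hg HL Hphi. apply cont_intro; auto. intros x eps He.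
  destruct (cont_elim op g Hg x (eps / (L + 1))) as [W [oW [Wx HW]]].
  { apply Rdiv_lt_0_compat; lra. }
  exists W; repeat split; auto. intros y Wy.
  specialize (HW y Wy). specialize (Hphi (g y) (g x)).
  assert (L * Rabs (g y - g x) <= L * (eps / (L+1))).
  { apply Rmult_le_compat_l; lra. }
  assert (L * (eps / (L+1)) < eps).
  { unfold Rdiv. apply Rmult_lt_reg_r with (L+1); [lra|].
    rewrite Rmult_assoc, Rmult_assoc, Rinv_l by lra. nra. }
  lra.
Qed.

Lemma cont_comp_pt {T} (op : (T->Prop)->Prop) (g : T -> R) (phi : R -> R) :
  is_topology op -> continuous_R op g ->
  (forall x, continuity_pt phi (g x)) -> continuous_R op (fun x => phi (g x)).
Proof.
  intros Ht Hg Hphi. apply cont_intro; auto. intros x eps He.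
  destruct (Hphi x eps He) as [d [dpos Hd]].
  destruct (cont_elim op g Hg x d dpos) as [W [oW [Wx HW]]].
  exists W; repeat split; auto. intros y Wy.
  destruct (Req_dec (g y) (g x)) as [E|E].
  - rewrite E. replace (phi (g x) - phi (g x)) with 0 by ring. rewrite Rabs_R0; auto.
  - apply (Hd (g y)). split. split; auto. exact I. auto. simpl. unfold R_dist. apply HW; auto.
Qed.

Lemma cont_compose {X K} (opX : (X->Prop)->Prop) (opK : (K->Prop)->Prop) (e : X -> K) G :
  continuous opX opK e -> continuous_R opK G -> continuous_R opX (fun x => G (e x)).
Proof. intros He HG V HV. apply (He (fun k => V (G k))). apply HG; auto. Qed.

Lemma cont_restrict {X} (opX : (X->Prop)->Prop) (D : X -> Prop) f :
  continuous_R opX f -> continuous_R (subspace_open opX D) (fun s => f (proj1_sig s)).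
Proof.
  intros Hf V HV y Vy. exists (fun x => V (f x)). repeat split; auto.
Qed.

Lemma subspace_topology {X} (opX : (X->Prop)->Prop) (D : X -> Prop) :
  is_topology opX -> is_topology (subspace_open opX D).
Proof.
  intros Ht. pose proof Ht as [HT [HF [HI HU]]]. repeat split.
  - intros y _. exists (fun _ => True); repeat split; auto.
  - intros y [].
  - intros U V oU oV y [Uy Vy].
    destruct (oU y Uy) as [U1 [o1 [h1 H1]]]. destruct (oV y Vy) as [V1 [o2 [h2 H2]]].
    exists (fun x => U1 x /\ V1 x); split; [apply HI; auto|split; [auto|]].
    intros z [a b]; split; auto.
  - intros F HF' y [U [FU Uy]]. destruct (HF' U FU y Uy) as [U1 [o1 [h1 H1]]].
    exists U1; repeat split; auto. intros z Hz. exists U; auto.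
Qed.


Section Urysohn.
Variables (T : Type) (op : (T -> Prop) -> Prop).
Hypothesis Htop : is_topology op.
Hypothesis Hnorm : normal_space op.

Lemma interpolate : forall A U, closed op A -> op U -> (forall x, A x -> U x) ->
  exists V, op V /\ (forall x, A x -> V x) /\ (forall x, closure op V x -> U x).
Proof.
  intros A U cA oU AU.
  destruct (Hnorm A (fun x => ~ U x) cA (closed_compl op U oU)) as [V [W [oV [oW [AV [UW VW]]]]]].
  { intros z [Az Uz]; auto. }
  exists V; repeat split; auto. intros x Hx. apply NNPP; intro nU.
  destruct (Hx W oW (UW x nU)) as [y [Wy Vy]]. apply (VW y); auto.
Qed.

Definition mid (V W : T -> Prop) : T -> Prop :=
  match em_inf (exists M, op M /\ (forall x, closure op V x -> M x) /\ (forall x, closure op M x -> W x)) with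
  | left H => proj1_sig (constructive_indefinite_description _ H)
  | right _ => W end.

Lemma mid_spec V W : op W -> (forall x, closure op V x -> W x) ->
  op (mid V W) /\ (forall x, closure op V x -> mid V W x) /\ (forall x, closure op (mid V W) x -> W x).
Proof.
  intros oW HVW. unfold mid. destruct em_inf as [H|H].
  - destruct (constructive_indefinite_description _ H) as [M HM]; simpl; auto.
  - exfalso; apply H. apply interpolate; auto. apply closed_closure; auto.
Qed.

Variables (V0 W1 : T -> Prop).
Hypothesis oV0 : op V0.
Hypothesis oW1 : op W1.
Hypothesis V0W1 : forall x, closure op V0 x -> W1 x.

Fixpoint L (n : nat) : nat -> T -> Prop :=
  match n with
  | O => fun k => match k with O => V0 | _ => W1 end
  | S n' => fun k => if Nat.even k then L n' (Nat.div2 k)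
                     else mid (L n' (Nat.div2 k)) (L n' (S (Nat.div2 k)))
  end.

Lemma L_S n k : L (S n) k = if Nat.even k then L n (Nat.div2 k)
                     else mid (L n (Nat.div2 k)) (L n (S (Nat.div2 k))).
Proof. reflexivity. Qed.

Lemma L_even n j : L (S n) (2 * j)%nat = L n j.
Proof. rewrite L_S. rewrite Nat.even_even, Nat.div2_double. auto. Qed.

Lemma L_odd n j : L (S n) (S (2 * j))%nat = mid (L n j) (L n (S j)).
Proof.
  rewrite L_S. replace (S (2*j)) with (2*j+1)%nat by lia.
  rewrite Nat.even_odd, Nat.div2_odd'. auto.
Qed.

Lemma L_inv n : (forall k, (k <= 2^n)%nat -> op (L n k)) /\
  (forall k, (k < 2^n)%nat -> forall x, closure op (L n k) x -> L n (S k) x).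
Proof.
  induction n as [|n [IH1 IH2]].
  - simpl. split.
    + intros k Hk. destruct k as [|[|k]]; auto; lia.
    + intros k Hk. assert (k = 0%nat) by lia. subst. simpl. auto.
  - assert (MS : forall j, (j < 2^n)%nat -> op (mid (L n j) (L n (S j))) /\
       (forall x, closure op (L n j) x -> mid (L n j) (L n (S j)) x) /\
       (forall x, closure op (mid (L n j) (L n (S j))) x -> L n (S j) x)).
    { intros j Hj. apply mid_spec. apply IH1; lia. apply IH2; lia. }
    simpl (2 ^ S n)%nat. split.
    + intros k Hk. destruct (Nat.Even_or_Odd k) as [[j ->]|[j ->]].
      * rewrite L_even. apply IH1. lia.
      * replace (2*j+1)%nat with (S (2*j)) by lia. rewrite L_odd.
        apply MS. lia.
    + intros k Hk. destruct (Nat.Even_or_Odd k) as [[j ->]|[j ->]].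
      * rewrite L_even. rewrite L_odd. apply MS. lia.
      * replace (2*j+1)%nat with (S (2*j)) by lia. rewrite L_odd.
        replace (S (S (2 * j))) with (2 * S j)%nat by lia. rewrite L_even.
        apply MS. lia.
Qed.

Definition U n k : T -> Prop := if Nat.leb k (2^n) then L n k else (fun _ => True).

Lemma U_open n k : op (U n k).
Proof.
  unfold U. destruct (Nat.leb_spec k (2^n)). apply L_inv; auto. apply op_True; auto.
Qed.

Lemma U_chain n k x : closure op (U n k) x -> U n (S k) x.
Proof.
  unfold U. destruct (Nat.leb_spec (S k) (2^n)).
  - destruct (Nat.leb_spec k (2^n)); [|lia]. apply L_inv; lia.
  - auto.
Qed.

Lemma U_incl n k x : U n k x -> U n (S k) x.
Proof. intros H; apply U_chain, closure_incl; auto. Qed.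

Lemma U_mono_level n k j x : (k <= j)%nat -> U n k x -> U n j x.
Proof.
  intros H. induction H; auto. intros Hx; apply U_incl; auto.
Qed.

Lemma U_double n k : U (S n) (2 * k)%nat = U n k.
Proof.
  unfold U. rewrite L_even. rewrite Nat.pow_succ_r'.
  destruct (Nat.leb_spec (2*k)%nat (2 * 2^n)%nat); destruct (Nat.leb_spec k (2^n)%nat); auto; lia.
Qed.

Lemma U_up n m k : U n k = U (n + m) (k * 2^m).
Proof.
  induction m.
  - rewrite Nat.add_0_r, Nat.mul_1_r. auto.
  - rewrite IHm. rewrite Nat.add_succ_r. rewrite <- U_double. f_equal. simpl. lia.
Qed.

Lemma U_mono n k m j x : INR k / 2^n <= INR j / 2^m -> U n k x -> U m j x.
Proof.
  intros H Hx. rewrite (U_up n m k) in Hx. rewrite (U_up m n j).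
  rewrite Nat.add_comm. apply U_mono_level with (k * 2^m)%nat; auto.
  apply INR_le. rewrite !mult_INR, !pow_INR. simpl (INR 2).
  assert (0 < 2^n) by (apply pow_lt; lra). assert (0 < 2^m) by (apply pow_lt; lra).
  replace (1+1) with 2 by ring.
  unfold Rdiv in H.
  apply Rmult_le_compat_r with (r := 2^n * 2^m) in H; [|nra].
  replace (INR k * / 2 ^ n * (2 ^ n * 2 ^ m)) with (INR k * 2^m) in H by (field; lra).
  replace (INR j * / 2 ^ m * (2 ^ n * 2 ^ m)) with (INR j * 2^n) in H by (field; lra).
  auto.
Qed.

Definition Ex (x : T) (r : R) : Prop :=
  r = 0 \/ exists n k, r = INR k / 2^n /\ ~ U n k x.

Lemma Ex_bound x : forall r, Ex x r -> r <= 1.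
Proof.
  intros r [->|[n [k [-> Hk]]]]; [lra|].
  assert (k <= 2^n)%nat.
  { unfold U in Hk. destruct (Nat.leb_spec k (2^n)); auto. exfalso; auto. }
  assert (0 < 2^n) by (apply pow_lt; lra).
  apply le_INR in H. rewrite pow_INR in H. simpl (INR 2) in H.
  replace (1+1) with 2 in H by ring.
  unfold Rdiv. apply Rmult_le_reg_r with (2^n); auto.
  rewrite Rmult_assoc, Rinv_l by lra. lra.
Qed.

Definition uf (x : T) : R :=
  proj1_sig (completeness (Ex x) (ex_intro _ 1 (Ex_bound x)) (ex_intro _ 0 (or_introl eq_refl))).

Lemma uf_lub x : is_lub (Ex x) (uf x).
Proof. unfold uf. destruct completeness; simpl; auto. Qed.

Lemma uf_range x : 0 <= uf x <= 1.
Proof.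
  destruct (uf_lub x) as [H1 H2]. split.
  - apply H1. left; auto.
  - apply H2. intros r Hr; apply Ex_bound with x; auto.
Qed.

Lemma uf_upper n k x : U n k x -> uf x <= INR k / 2^n.
Proof.
  intros Hx. destruct (uf_lub x) as [H1 H2]. apply H2.
  intros r [->|[m [j [-> Hj]]]].
  - unfold Rdiv. apply Rmult_le_pos. apply pos_INR. left; apply Rinv_0_lt_compat, pow_lt; lra.
  - destruct (Rle_or_lt (INR j / 2^m) (INR k / 2^n)) as [h|h]; auto.
    exfalso. apply Hj. apply U_mono with n k; auto. lra.
Qed.

Lemma uf_lower n k x : ~ U n k x -> INR k / 2^n <= uf x.
Proof.
  intros Hx. destruct (uf_lub x) as [H1 H2]. apply H1. right. exists n, k; auto.
Qed.

Lemma least_nat (P : nat -> Prop) n : P n -> exists m, P m /\ forall k, (k < m)%nat -> ~ P k.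
Proof.
  revert n. induction n as [n IH] using (well_founded_induction Wf_nat.lt_wf).
  intros Pn. destruct (classic (exists k, (k < n)%nat /\ P k)) as [[k [Hk Pk]]|H].
  - apply (IH k Hk Pk).
  - exists n; split; auto. intros k Hk Pk; apply H; eauto.
Qed.

Lemma pow2_unbounded M : exists N, M < 2^N.
Proof.
  assert (H : forall N, INR N < 2^N).
  { induction N. simpl; lra. rewrite S_INR. simpl.
    assert (1 <= 2^N) by (apply pow_R1_Rle; lra). lra. }
  destruct (INR_archimed 1 M) as [N HN]; [lra|].
  exists N. specialize (H N). lra.
Qed.

Lemma uf_cont : continuous_R op uf.
Proof.
  apply cont_intro; auto. intros x eps He.
  destruct (pow2_unbounded (2 / eps)) as [N HN].
  assert (P2 : 0 < 2^N) by (apply pow_lt; lra).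
  set (t := / 2^N).
  assert (Ht : 2 * t < eps).
  { unfold t. apply Rmult_lt_reg_r with (2^N); auto. rewrite Rmult_assoc, Rinv_l by lra.
    apply Rmult_lt_reg_r with (/eps). apply Rinv_0_lt_compat; lra.
    replace (eps * 2 ^ N * / eps) with (2^N) by (field; lra). lra. }
  assert (t0 : 0 < t) by (apply Rinv_0_lt_compat; auto).
  assert (HU : U N (S (2^N)) x).
  { unfold U. destruct (Nat.leb_spec (S (2^N)) (2^N)); [lia|auto]. }
  destruct (least_nat (fun m => U N m x) _ HU) as [m [Hm Hmin]].
  assert (E : forall k, INR k / 2^N = INR k * t) by (intros; unfold Rdiv, t; auto).
  assert (up1 := uf_upper N m x Hm). rewrite E in up1.
  pose proof (uf_range x) as Rx.
  destruct (Nat.lt_ge_cases m 2) as [Hm2|Hm2].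
  - exists (U N m); split; [apply U_open|split; auto].
    intros y Hy. pose proof (uf_upper N m y Hy) as up2. rewrite E in up2.
    pose proof (uf_range y) as Ry.
    assert (INR m <= 1) by (replace 1 with (INR 1) by auto; apply le_INR; lia).
    assert (INR m * t <= t) by nra.
    sabs; lra.
  - exists (fun y => U N m y /\ ~ closure op (U N (m-2)) y). split.
    { apply op_inter; auto. apply U_open. apply open_compl_closure; auto. }
    assert (low1 : INR (m - 1) * t <= uf x).
    { rewrite <- E. apply uf_lower. apply Hmin. lia. }
    rewrite minus_INR in low1 by lia. simpl (INR 1) in low1.
    split.
    + split; auto. intros Hc. apply U_chain in Hc. replace (S (m-2)) with (m-1)%nat in Hc by lia.
      apply (Hmin (m-1)%nat); auto; lia.
    + intros y [Hy Hy2]. pose proof (uf_upper N m y Hy) as up2. rewrite E in up2.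
      assert (low2 : INR (m - 2) * t <= uf y).
      { rewrite <- E. apply uf_lower. intro; apply Hy2; apply closure_incl; auto. }
      rewrite minus_INR in low2 by lia. simpl (INR 2) in low2.
      sabs; nra.
Qed.

End Urysohn.

Theorem urysohn {T} (op : (T -> Prop) -> Prop) : is_topology op -> normal_space op ->
  forall A B, closed op A -> closed op B -> (forall z, ~ (A z /\ B z)) ->
  exists f, continuous_R op f /\ (forall x, 0 <= f x <= 1) /\ (forall x, A x -> f x = 0) /\
    (forall x, B x -> f x = 1).
Proof.
  intros Ht Hn A B cA cB AB.
  assert (oW : op (fun x => ~ B x)) by apply cB.
  destruct (interpolate T op Hn A (fun x => ~ B x) cA oW) as [V0 [oV [AV VW]]].
  { intros x Ax Bx; apply (AB x); auto. }
  set (W := fun x => ~ B x).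
  assert (VW' : forall x, closure op V0 x -> W x) by exact VW.
  exists (uf T op V0 W). split; [|split; [|split]].
  - apply (uf_cont T op Ht Hn V0 W oV oW VW').
  - intros; apply (uf_range T op V0 W).
  - intros x Ax. pose proof (uf_range T op V0 W x).
    assert (U T op V0 W 0 0 x).
    { unfold U. simpl. auto. }
    pose proof (uf_upper T op Ht Hn V0 W oV oW VW' 0 0 x H0). simpl in H1. lra.
  - intros x Bx. pose proof (uf_range T op V0 W x).
    assert (~ U T op V0 W 0 1 x).
    { unfold U. simpl. unfold W; auto. }
    pose proof (uf_lower T op V0 W 0 1 x H0). simpl in H1. lra.
Qed.


Section Beta.
Variables (X K : Type) (opX : (X -> Prop) -> Prop) (opK : (K -> Prop) -> Prop) (e : X -> K).
Hypothesis HtX : is_topology opX.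
Hypothesis HnX : normal_space opX.
Hypothesis Hsc : stone_cech opX opK e.

Lemma HtK : is_topology opK. Proof. destruct Hsc; tauto. Qed.
Lemma HcK : compact opK. Proof. destruct Hsc; tauto. Qed.
Lemma HhK : hausdorff opK. Proof. destruct Hsc; tauto. Qed.
Lemma He_emb : embedding opX opK e. Proof. destruct Hsc; tauto. Qed.
Lemma He_cont : continuous opX opK e. Proof. destruct He_emb; tauto. Qed.
Lemma Hdense : forall p, closure opK (fun q => exists x, e x = q) p.
Proof. destruct Hsc; tauto. Qed.
Lemma Hext : forall f, continuous_R opX f -> (exists M, forall x, Rabs (f x) <= M) ->
     exists g, continuous_R opK g /\ forall x, g (e x) = f x.
Proof. destruct Hsc; tauto. Qed.

Lemma dense_meet W p : opK W -> W p -> exists x, W (e x).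
Proof.
  intros oW Wp. destruct (Hdense p W oW Wp) as [q [Wq [x <-]]]. eauto.
Qed.

Lemma open_in_closure W : opK W -> forall k, W k ->
  closure opK (fun q => exists x, W (e x) /\ e x = q) k.
Proof.
  intros oW k Wk N oN Nk.
  destruct (dense_meet (fun z => N z /\ W z) k) as [x [Nx Wx]].
  { apply op_inter; auto. apply HtK. } { auto. }
  exists (e x); split; eauto.
Qed.

Lemma closure_pull (S : X -> Prop) x :
  closure opK (fun q => exists y, S y /\ e y = q) (e x) -> closure opX S x.
Proof.
  intros H U oU Ux. destruct He_emb as [_ [_ H3]].
  destruct (H3 U oU) as [W [oW HW]].
  destruct (H W oW) as [q [Wq [y [Sy <-]]]]. apply HW; auto.
  exists y; split; auto. apply HW; auto.
Qed.

Lemma ext_le G H : continuous_R opK G -> continuous_R opK H ->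
  (forall x, G (e x) <= H (e x)) -> forall k, G k <= H k.
Proof.
  intros cG cH Hle k. apply Rnot_lt_le. intros Hlt.
  set (c := (G k + H k) / 2).
  destruct (dense_meet (fun z => c < G z /\ H z < c) k) as [x [h1 h2]].
  { apply op_inter. apply HtK.
    apply (cont_preimage opK G (fun t => c < t)); auto. apply R_open_gt.
    apply (cont_preimage opK H (fun t => t < c)); auto. apply R_open_lt. }
  { unfold c; split; lra. }
  specialize (Hle x). lra.
Qed.

Lemma regular : forall A q, closed opK A -> ~ A q -> exists U V, opK U /\ opK V /\ U q /\
  (forall z, A z -> V z) /\ forall z, ~ (U z /\ V z).
Proof.
  intros A q cA nAq.
  set (G := fun W : K -> Prop => exists U, opK U /\ U q /\ forall z, ~ (U z /\ W z)).
  set (F := fun W : K -> Prop => opK W /\ (W = (fun z => ~ A z) \/ G W)).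
  destruct (HcK F) as [l [Hl Hcov]].
  { intros U [h _]; auto. }
  { intros k. destruct (classic (A k)) as [Ak|nAk].
    - assert (q <> k) by (intro; subst; auto).
      destruct (HhK q k H) as [U [V [oU [oV [Uq [Vk UV]]]]]].
      exists V; split; auto. split; auto. right. exists U; auto.
    - exists (fun z => ~ A z); split; auto. split; auto. }
  assert (Hind : forall l : list (K -> Prop), exists U, opK U /\ U q /\
            forall W, In W l -> G W -> forall z, ~ (U z /\ W z)).
  { induction l0 as [|W l0 [U [oU [Uq HU]]]].
    - exists (fun _ => True). split; [apply op_True, HtK|split; [exact I|intros W []]].
    - destruct (classic (G W)) as [[U' [oU' [U'q HU']]]|nG].
      + exists (fun z => U z /\ U' z). split; [apply op_inter; auto; apply HtK|]. split; auto.
        intros W' [<-|iW'] gW' z [[a b] c]. apply (HU' z); auto. apply (HU W' iW' gW' z); auto.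
      + exists U. split; auto. split; auto.
        intros W' [<-|iW'] gW'; [contradiction|]. auto. }
  destruct (Hind l) as [U [oU [Uq HU]]].
  exists U, (fun z => exists W, In W l /\ G W /\ W z). split; auto. split.
  { apply open_local. apply HtK. intros z [W [iW [gW Wz]]].
    exists W. split. apply (Hl W iW). split; auto. intros y Wy; exists W; auto. }
  split; auto. split.
  - intros z Az. destruct (Hcov z) as [W [iW Wz]]. exists W; split; auto. split; auto.
    destruct (Hl W iW) as [_ [->|g]]; auto. contradiction.
  - intros z [Uz [W [iW [gW Wz]]]]. apply (HU W iW gW z); auto.
Qed.

Lemma shrink : forall O q, opK O -> O q -> exists V, opK V /\ V q /\ forall k, closure opK V k -> O k.
Proof.
  intros O q oO Oq.
  destruct (regular (fun z => ~ O z) q (closed_compl opK O oO)) as [U [V [oU [oV [Uq [AV UV]]]]]].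
  { auto. }
  exists U; split; auto; split; auto. intros k Hk. apply NNPP; intro nO.
  destruct (Hk V oV (AV k nO)) as [z [Vz Uz]]. apply (UV z); auto.
Qed.

Lemma bump : forall O q, opK O -> O q -> exists F, continuous_R opK F /\
  (forall k, 0 <= F k <= 1) /\ F q = 1 /\ forall k, F k <> 0 -> O k.
Proof.
  intros O q oO Oq.
  destruct (shrink O q oO Oq) as [V2 [oV2 [V2q H2]]].
  destruct (shrink V2 q oV2 V2q) as [V1 [oV1 [V1q H1]]].
  set (A := fun x => ~ V2 (e x)).
  set (B := fun x => closure opK V1 (e x)).
  assert (cA : closed opX A).
  { apply closed_compl. apply He_cont; auto. }
  assert (cB : closed opX B).
  { unfold closed, B. apply (He_cont (fun k => ~ closure opK V1 k)). apply open_compl_closure, HtK. }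
  destruct (urysohn opX HtX HnX A B cA cB) as [f [cf [rf [fA fB]]]].
  { intros z [Az Bz]. apply Az. apply H1; auto. }
  destruct (Hext f cf) as [g [cg hg]].
  { exists 1. intros x. specialize (rf x). sabs; lra. }
  assert (Rg : forall k, 0 <= g k <= 1).
  { intros k; split.
    - apply (ext_le (fun _ => 0) g); auto. apply cont_const, HtK. intros x; rewrite hg; apply rf.
    - apply (ext_le g (fun _ => 1)); auto. apply cont_const, HtK. intros x; rewrite hg; apply rf. }
  exists g. split; auto. split; auto. split.
  - apply NNPP; intro ne.
    destruct (dense_meet (fun z => V1 z /\ g z <> 1) q) as [x [h1 h2]].
    { apply op_inter. apply HtK. auto. apply (cont_preimage opK g (fun t => t <> 1)); auto. apply R_open_neq. }
    { auto. }
    apply h2. rewrite hg. apply fB. apply closure_incl; auto.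
  - intros k gk. apply NNPP; intro nO.
    destruct (dense_meet (fun z => ~ closure opK V2 z /\ g z <> 0) k) as [x [h1 h2]].
    { apply op_inter. apply HtK. apply open_compl_closure, HtK.
      apply (cont_preimage opK g (fun t => t <> 0)); auto. apply R_open_neq. }
    { split; auto. }
    apply h2. rewrite hg. apply fA. intro; apply h1; apply closure_incl; auto.
Qed.

End Beta.


Lemma sig_eq_proj {X} (D : X -> Prop) (s t : {x | D x}) : proj1_sig s = proj1_sig t -> s = t.
Proof. destruct s, t; simpl; intros ->; f_equal; apply proof_irrelevance. Qed.

Lemma singleton_closed {X} (opX : (X -> Prop) -> Prop) : is_topology opX -> hausdorff opX ->
  forall t, closed opX (fun y => y = t).
Proof.
  intros Ht Hh t. unfold closed. apply open_local; auto. intros y ny.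
  destruct (Hh y t ny) as [U [V [oU [oV [Uy [Vt UV]]]]]].
  exists U; split; auto; split; auto. intros z Uz ->. apply (UV t); auto.
Qed.

Lemma cont_subspace_local {X} (opX : (X -> Prop) -> Prop) (D : X -> Prop) (f : {x | D x} -> R) :
  is_topology opX -> continuous_R (subspace_open opX D) f -> forall s eps, 0 < eps ->
  exists U, opX U /\ U (proj1_sig s) /\ forall z, U (proj1_sig z) -> Rabs (f z - f s) < eps.
Proof.
  intros Ht Hf s eps He.
  destruct (cont_elim _ f Hf s eps He) as [W [oW [Ws HW]]].
  destruct (oW s Ws) as [U [oU [Us HU]]]. exists U; split; auto.
Qed.

Section RC.
Variables (X K : Type) (opX : (X -> Prop) -> Prop) (opK : (K -> Prop) -> Prop) (e : X -> K).
Hypothesis HtX : is_topology opX.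
Hypothesis HhX : hausdorff opX.
Hypothesis HcrX : completely_regular opX.
Hypothesis HnX : normal_space opX.
Hypothesis Hsc : stone_cech opX opK e.

Lemma RC (D : X -> Prop) : closed opX D ->
  (forall q, closure opK (fun k => exists x, D x /\ e x = k) q -> upsilon opX opK e q ->
     exists x, e x = q) ->
  realcompact (subspace_open opX D).
Proof.
  intros cD HD.
  set (S := {x | D x}).
  set (opS := subspace_open opX D).
  assert (HtS : is_topology opS) by (apply subspace_topology; auto).
  set (Idx := {f : S -> R | continuous_R opS f}).
  set (h := fun (s : S) (i : Idx) => proj1_sig i s).
  assert (HtK := HtK X K opX opK e Hsc).
  exists Idx, h. split; [split; [|split]|].
  -
    intros s t E. apply NNPP; intro ne.
    assert (ne' : proj1_sig s <> proj1_sig t) by (intro E'; apply ne; apply sig_eq_proj; auto).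
    destruct (HcrX (fun y => y = proj1_sig t) (proj1_sig s) (singleton_closed opX HtX HhX _) ne')
      as [f [cf [rf [fs ft]]]].
    set (i := exist (fun g : S -> R => continuous_R opS g) (fun z : S => f (proj1_sig z))
                 (cont_restrict opX D f cf) : Idx).
    assert (E2 := f_equal (fun y => y i) E). unfold h, i in E2; simpl in E2.
    rewrite fs, (ft (proj1_sig t) eq_refl) in E2. lra.
  -
    intros W HW s Ws.
    destruct (HW (h s) Ws) as [l [eps [epos Hbox]]].
    assert (Hl : forall l : list Idx, exists U, opX U /\ U (proj1_sig s) /\
              forall z : S, U (proj1_sig z) -> forall i, In i l -> Rabs (h z i - h s i) < eps).
    { induction l0 as [|i l0 [U [oU [Us HU]]]].
      - exists (fun _ => True). split; [apply op_True; auto|split; [exact I|]]. intros z _ i [].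
      - destruct (cont_subspace_local opX D (proj1_sig i) HtX (proj2_sig i) s eps epos)
          as [U' [oU' [U's HU']]].
        exists (fun x => U x /\ U' x). split; [apply op_inter; auto|split; [split; auto|]].
        intros z [Uz U'z] j [<-|ij]. apply HU'; auto. apply HU; auto. }
    destruct (Hl l) as [U [oU [Us HU]]].
    exists U; split; [auto|split; [auto|]]. intros z Uz. apply Hbox. intros i il.
    apply HU; auto.
  -
    intros U oU.
    exists (fun y => exists i : Idx, (forall z, Rabs (proj1_sig i z) < 1 -> U z) /\ Rabs (y i) < 1).
    split.
    + intros y [i [Hi yi]]. exists (i :: nil), (1 - Rabs (y i)). split; [lra|].
      intros y' Hy'. exists i. split; auto. specialize (Hy' i (or_introl eq_refl)). sabs; lra.
    + intros s; split.
      * intros Us. destruct (oU s Us) as [U' [oU' [U's HU']]].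
        destruct (HcrX (fun x => ~ U' x) (proj1_sig s) (closed_compl opX U' oU')) as [f [cf [rf [fs fA]]]].
        { intro H; auto. }
        exists (exist (fun g : S -> R => continuous_R opS g) (fun z : S => f (proj1_sig z))
                 (cont_restrict opX D f cf)). simpl. split.
        -- intros z Hz. apply HU'. apply NNPP; intro nU. rewrite (fA _ nU) in Hz. sabs; lra.
        -- unfold h; simpl. rewrite fs. sabs; lra.
      * intros [i [Hi hi]]. apply Hi. auto.
  -
    unfold closed. intros y ny. apply NNPP; intro Hn.
    assert (Happrox : forall l eps, 0 < eps -> exists s : S, forall i, In i l -> Rabs (h s i - y i) < eps).
    { intros l eps epos. apply NNPP; intro ns. apply Hn. exists l, eps; split; auto.
      intros y' Hy' [s <-]. apply ns. exists s. auto. }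
    set (Zs := fun l eps k => exists s : S, (forall i, In i l -> Rabs (h s i - y i) < eps) /\
                                    e (proj1_sig s) = k).
    assert (Hq : exists q, forall l eps, 0 < eps -> closure opK (Zs l eps) q).
    { apply NNPP; intro nq.
      set (F := fun W : K -> Prop => exists l eps, 0 < eps /\ W = (fun k => ~ closure opK (Zs l eps) k)).
      destruct (HcK X K opX opK e Hsc F) as [L [HL Hcov]].
      { intros W [l [eps [_ ->]]]. apply open_compl_closure; auto. }
      { intros k. apply NNPP; intro nk. apply nq. exists k. intros l eps epos. apply NNPP; intro nc.
        apply nk. exists (fun k => ~ closure opK (Zs l eps) k). split; auto. exists l, eps; auto. }
      assert (Hcomb : forall L', (forall W, In W L' -> F W) -> exists ls epss, 0 < epss /\
                forall W, In W L' -> exists l eps, 0 < eps /\ W = (fun k => ~ closure opK (Zs l eps) k) /\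
                   (forall i, In i l -> In i ls) /\ epss <= eps).
      { induction L' as [|W L' IH]; intros HL'.
        - exists nil, 1. split; [lra|]. intros W [].
        - destruct IH as [ls [epss [ep Hls]]]. intros; apply HL'; right; auto.
          destruct (HL' W (or_introl eq_refl)) as [l [eps [epos EW]]].
          exists (l ++ ls), (Rmin eps epss). split. apply Rmin_glb_lt; auto.
          intros W' [<-|iW'].
          + exists l, eps. split; auto. split; auto. split.
            intros i il; apply in_or_app; auto. apply Rmin_l.
          + destruct (Hls W' iW') as [l' [eps' [e1 [e2 [e3 e4]]]]].
            exists l', eps'. split; auto. split; auto. split.
            intros i il; apply in_or_app; auto. pose proof (Rmin_r eps epss). lra. }
      destruct (Hcomb L HL) as [ls [epss [ep Hls]]].
      destruct (Happrox ls epss ep) as [s Hs].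
      destruct (Hcov (e (proj1_sig s))) as [W [iW Wk]].
      destruct (Hls W iW) as [l [eps [e1 [e2 [e3 e4]]]]]. subst W.
      apply Wk. apply closure_incl. exists s. split; auto. intros i il.
      specialize (Hs i (e3 i il)). lra. }
    destruct Hq as [q Hq].
    assert (qD : closure opK (fun k => exists x, D x /\ e x = k) q).
    { apply (closure_mono opK (Zs nil 1)). intros k [s [_ <-]]. exists (proj1_sig s).
      split; auto. apply (proj2_sig s). apply Hq; lra. }
    assert (qU : upsilon opX opK e q).
    { intros g cg gq. apply NNPP; intro nz.
      assert (nz' : forall x, g (e x) <> 0) by (intros x hx; apply nz; eauto).
      assert (ci : continuous_R opX (fun x => / g (e x))).
      { apply (cont_comp_pt opX (fun x => g (e x)) (fun t => / t)); auto.
        apply (cont_compose opX opK e g); auto. apply (He_cont X K opX opK e Hsc).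
        intros x. apply (continuity_pt_inv (fun t => t)). apply derivable_continuous_pt.
        apply derivable_pt_id. auto. }
      set (i0 := exist (fun g : S -> R => continuous_R opS g) (fun z : S => / g (e (proj1_sig z)))
                 (cont_restrict opX D _ ci) : Idx).
      set (M := Rabs (y i0) + 1).
      assert (Mpos : 0 < M) by (unfold M; pose proof (Rabs_pos (y i0)); lra).
      destruct (Hq (i0 :: nil) 1 ltac:(lra) (fun k => Rabs (g k - 0) < / M)) as [k [Nk [s [Hs <-]]]].
      { apply (cont_preimage opK g (fun t => Rabs (t - 0) < / M)); auto. apply R_open_ball. }
      { rewrite gq. replace (0 - 0) with 0 by ring. rewrite Rabs_R0. apply Rinv_0_lt_compat; auto. }
      specialize (Hs i0 (or_introl eq_refl)). unfold h, i0 in Hs; simpl in Hs.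
      set (a := g (e (proj1_sig s))) in *.
      assert (an : a <> 0) by apply nz'.
      rewrite Rminus_0_r in Nk.
      assert (pa : 0 < Rabs a) by (apply Rabs_pos_lt; auto).
      fold i0 in Hs.
      assert (Hb : Rabs (/ a) < Rabs (y i0) + 1).
      { pose proof (Rabs_triang (/a - y i0) (y i0)). replace (/ a - y i0 + y i0) with (/a) in H by ring. lra. }
      rewrite Rabs_inv in Hb.
      assert (Rabs a * M < 1).
      { apply Rmult_lt_reg_r with (/M). apply Rinv_0_lt_compat; auto.
        rewrite Rmult_assoc, Rinv_r, Rmult_1_r, Rmult_1_l by lra. auto. }
      assert (M < / Rabs a).
      { apply Rmult_lt_reg_l with (Rabs a); auto. rewrite Rinv_r by lra. lra. }
      unfold M in *. lra. }
    destruct (HD q qD qU) as [x0 <-].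
    assert (d0 : D x0).
    { apply (closure_closed opX); auto. apply (closure_pull X K opX opK e Hsc). auto. }
    set (s0 := exist D x0 d0 : S).
    assert (yne : y <> h s0) by (intro E; apply ny; exists s0; auto).
    assert (Hi : exists i, y i <> h s0 i).
    { apply NNPP; intro H. apply yne. apply functional_extensionality. intros i.
      apply NNPP; intro H'. apply H; eauto. }
    destruct Hi as [i Hi].
    set (eps := Rabs (y i - h s0 i) / 2).
    assert (epos : 0 < eps).
    { unfold eps. assert (0 < Rabs (y i - h s0 i)) by (apply Rabs_pos_lt; lra). lra. }
    destruct (cont_subspace_local opX D (proj1_sig i) HtX (proj2_sig i) s0 eps epos)
      as [U [oU [Us HU]]].
    destruct (He_emb X K opX opK e Hsc) as [_ [_ H3]].
    destruct (H3 U oU) as [W [oW HW]].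
    destruct (Hq (i :: nil) eps epos W oW) as [k [Wk [s [Hs <-]]]].
    { apply HW; auto. }
    specialize (Hs i (or_introl eq_refl)).
    assert (Rabs (h s i - h s0 i) < eps) by (apply HU; apply HW; auto).
    unfold eps in *. sabs; lra.
Qed.

End RC.


Definition sg (u : R) : R := u / (1 + Rabs u).
Definition sgi (t : R) : R := t / (1 - Rabs t).

Lemma sg_cont_pt a : continuity_pt sg a.
Proof.
  unfold sg. apply (continuity_pt_div (fun u => u) (fun u => 1 + Rabs u)).
  - apply derivable_continuous_pt, derivable_pt_id.
  - apply (continuity_pt_plus (fun _ => 1) (fun u => Rabs u)).
    apply continuity_pt_const; intros ? ?; auto.
    apply Rcontinuity_abs.
  - pose proof (Rabs_pos a); lra.
Qed.

Lemma sg_abs u : Rabs (sg u) = Rabs u / (1 + Rabs u).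
Proof.
  unfold sg, Rdiv. rewrite Rabs_mult, Rabs_inv. pose proof (Rabs_pos u).
  rewrite (Rabs_pos_eq (1 + Rabs u)) by lra. auto.
Qed.

Lemma sg_abs2 u : (1 + Rabs u) * (1 - Rabs (sg u)) = 1.
Proof. rewrite sg_abs. pose proof (Rabs_pos u). field. lra. Qed.

Lemma sg_bound u : Rabs (sg u) < 1.
Proof. rewrite sg_abs. pose proof (Rabs_pos u). apply Rmult_lt_reg_r with (1 + Rabs u); [lra|].
  unfold Rdiv. rewrite Rmult_assoc, Rinv_l by lra. lra. Qed.

Lemma sg_sgi t : Rabs t < 1 -> sg (sgi t) = t.
Proof.
  intros Ht. unfold sg, sgi. pose proof (Rabs_pos t).
  assert (E : Rabs (t / (1 - Rabs t)) = Rabs t / (1 - Rabs t)).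
  { unfold Rdiv. rewrite Rabs_mult, Rabs_inv, (Rabs_pos_eq (1 - Rabs t)) by lra. auto. }
  rewrite E. field. split; lra.
Qed.

Lemma sg_inv a b : Rabs (a - b) <= (1 + Rabs a) * (1 + Rabs b) * Rabs (sg a - sg b).
Proof.
  pose proof (Rabs_pos a) as pa; pose proof (Rabs_pos b) as pb.
  assert (E : sg a - sg b = (a * (1 + Rabs b) - b * (1 + Rabs a)) / ((1 + Rabs a) * (1 + Rabs b))).
  { unfold sg. field. split; lra. }
  rewrite E. unfold Rdiv. rewrite Rabs_mult, Rabs_inv.
  rewrite (Rabs_pos_eq ((1 + Rabs a) * (1 + Rabs b))) by nra.
  rewrite <- Rmult_assoc. rewrite (Rmult_comm _ (Rabs _)). rewrite Rmult_assoc, Rinv_r by nra.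
  rewrite Rmult_1_r.
  destruct (Rabs_cases a) as [[a0 ea]|[a0 ea]]; destruct (Rabs_cases b) as [[b0 eb]|[b0 eb]];
    rewrite ea, eb in *.
  - replace (a * (1 + b) - b * (1 + a)) with (a - b) by ring. lra.
  - replace (a * (1 + - b) - b * (1 + a)) with (a - b - 2 * a * b) by ring.
    rewrite !Rabs_pos_eq by nra. nra.
  - replace (a * (1 + b) - b * (1 + - a)) with (a - b + 2 * a * b) by ring.
    rewrite (Rabs_left (a - b)) by lra. rewrite (Rabs_left (a - b + 2 * a * b)) by nra. nra.
  - replace (a * (1 + - b) - b * (1 + - a)) with (a - b) by ring. lra.
Qed.

Lemma sg_approx a b eta : 0 < eta -> Rabs (sg a - sg b) < eta -> eta <= (1 - Rabs (sg b)) / 2 ->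
  Rabs (a - b) < 2 * eta / (1 - Rabs (sg b)) ^ 2.
Proof.
  intros ep H1 H2.
  pose proof (sg_abs2 a) as Ea. pose proof (sg_abs2 b) as Eb.
  pose proof (sg_inv a b) as Hi.
  pose proof (sg_bound b) as Bb. pose proof (Rabs_pos a). pose proof (Rabs_pos b).
  set (u := Rabs (sg a)) in *. set (v := Rabs (sg b)) in *.
  assert (Hu : u < v + eta).
  { unfold u, v. pose proof (Rabs_triang (sg a - sg b) (sg b)).
    replace (sg a - sg b + sg b) with (sg a) in H3 by ring. lra. }
  assert (Hu2 : 1 - u > (1 - v) / 2) by lra.
  assert (A1 : 1 + Rabs a = / (1 - u)).
  { apply Rmult_eq_reg_r with (1 - u); [|lra]. rewrite Ea, Rinv_l; lra. }
  assert (B1 : 1 + Rabs b = / (1 - v)).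
  { apply Rmult_eq_reg_r with (1 - v); [|lra]. rewrite Eb, Rinv_l; lra. }
  rewrite A1, B1 in Hi.
  assert (Hlt : / (1 - u) * / (1 - v) * Rabs (sg a - sg b) < / (1-u) * / (1 - v) * eta).
  { apply Rmult_lt_compat_l; auto. apply Rmult_lt_0_compat; apply Rinv_0_lt_compat; lra. }
  assert (/ (1 - u) < 2 / (1 - v)).
  { apply Rmult_lt_reg_r with ((1-u) * (1 - v)). nra.
    replace (/ (1 - u) * ((1 - u) * (1 - v))) with (1 - v) by (field; lra).
    replace (2 / (1 - v) * ((1 - u) * (1 - v))) with (2 * (1 - u)) by (field; lra). lra. }
  assert (/ (1-u) * / (1 - v) * eta <= 2 / (1-v) * / (1-v) * eta).
  { apply Rmult_le_compat_r; [lra|]. apply Rmult_le_compat_r. left; apply Rinv_0_lt_compat; lra. lra. }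
  replace (2 * eta / (1 - v) ^ 2) with (2 / (1-v) * / (1-v) * eta) by (field; lra).
  lra.
Qed.


Section Dir1.
Variables (X K : Type) (opX : (X -> Prop) -> Prop) (opK : (K -> Prop) -> Prop) (e : X -> K).
Hypothesis HtX : is_topology opX.
Hypothesis HnX : normal_space opX.
Hypothesis Hsc : stone_cech opX opK e.

Lemma dir1 (C : X -> Prop) p :
  realcompact (subspace_open opX (closure opX C)) ->
  interior opK (closure opK (fun q => exists x, C x /\ e x = q)) p ->
  ~ closure opK (fun q => upsilon opX opK e q /\ ~ (exists x, e x = q)) p.
Proof.
  intros [Idx [h [[hinj [hcont hopen]] hclosed]]] [O [oO [Op HO]]] Hcl.
  assert (HtK := HtK X K opX opK e Hsc).
  assert (Hec := He_cont X K opX opK e Hsc).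
  destruct (Hcl O oO Op) as [q [Oq [qU qnX]]].
  set (D := closure opX C) in *.
  set (S := {x | D x}) in *.
  set (opS := subspace_open opX D) in *.
  assert (HtS : is_topology opS) by (apply subspace_topology; auto).
  assert (OD : forall x, O (e x) -> D x).
  { intros x Ox. apply (closure_pull X K opX opK e Hsc). apply HO; auto. }
  destruct (bump X K opX opK e HtX HnX Hsc O q oO Oq) as [F [cF [rF [Fq FO]]]].
  assert (cFe : continuous_R opX (fun x => F (e x))) by (apply (cont_compose opX opK e F); auto).
  assert (hci : forall i, continuous_R opS (fun s => h s i)).
  { intros i V HV. apply (hcont (fun y => V (y i))).
    intros y Vy. destruct (HV _ Vy) as [d [dpos Hd]]. exists (i :: nil), d. split; auto.
    intros y' Hy'. apply Hd. apply Hy'; left; auto. }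
  assert (hsi : forall i, continuous_R opS (fun s => sg (h s i))).
  { intros i. apply (cont_comp_pt opS (fun s => h s i) sg); auto. intros; apply sg_cont_pt. }
  set (k := fun i x => match em_inf (D x) with
                       | left d => F (e x) * sg (h (exist D x d) i)
                       | right _ => 0 end).
  assert (kD : forall i x (d : D x), k i x = F (e x) * sg (h (exist D x d) i)).
  { intros i x d. unfold k. destruct em_inf as [d'|nd]; [|contradiction].
    rewrite (proof_irrelevance _ d' d). auto. }
  assert (knD : forall i x, ~ D x -> k i x = 0).
  { intros i x nd. unfold k. destruct em_inf; [contradiction|auto]. }
  assert (kb1 : forall i x, Rabs (k i x) <= F (e x)).
  { intros i x. destruct (classic (D x)) as [d|nd].
    - rewrite (kD i x d). rewrite Rabs_mult. pose proof (sg_bound (h (exist D x d) i)).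
      pose proof (rF (e x)). rewrite (Rabs_pos_eq (F (e x))) by lra.
      pose proof (Rabs_pos (sg (h (exist D x d) i))). nra.
    - rewrite knD, Rabs_R0 by auto. apply rF. }
  assert (kb2 : forall i x, Rabs (k i x) < 1).
  { intros i x. destruct (classic (D x)) as [d|nd].
    - rewrite (kD i x d). rewrite Rabs_mult. pose proof (sg_bound (h (exist D x d) i)).
      pose proof (rF (e x)). rewrite (Rabs_pos_eq (F (e x))) by lra.
      pose proof (Rabs_pos (sg (h (exist D x d) i))). nra.
    - rewrite knD, Rabs_R0 by auto. lra. }
  assert (kc : forall i, continuous_R opX (k i)).
  { intros i. apply cont_intro; auto. intros x eps epos.
    destruct (Req_dec (F (e x)) 0) as [F0|F0].
    - exists (fun y => F (e y) < eps). split.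
      { apply (cont_preimage opX (fun y => F (e y)) (fun t => t < eps)); auto. apply R_open_lt. }
      split; [lra|]. intros y Hy.
      assert (kx : k i x = 0).
      { destruct (classic (D x)) as [d|nd]. rewrite (kD i x d), F0; ring. apply knD; auto. }
      rewrite kx, Rminus_0_r. pose proof (kb1 i y). lra.
    - assert (d : D x) by (apply OD, FO; auto).
      destruct (cont_elim opX _ cFe x (eps/2) ltac:(lra)) as [W1 [o1 [W1x H1]]].
      destruct (cont_subspace_local opX D _ HtX (hsi i) (exist D x d) (eps/2) ltac:(lra))
        as [U3 [o3 [U3x H3]]].
      exists (fun y => (W1 y /\ F (e y) <> 0) /\ U3 y). split.
      { apply op_inter; auto. apply op_inter; auto.
        apply (cont_preimage opX (fun y => F (e y)) (fun t => t <> 0)); auto. apply R_open_neq. }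
      split; [split; [split|]; auto|]. simpl in U3x; auto.
      intros y [[W1y Fy] U3y].
      assert (dy : D y) by (apply OD, FO; auto).
      rewrite (kD i y dy), (kD i x d).
      specialize (H1 y W1y). specialize (H3 (exist D y dy) U3y). simpl in H3.
      set (a := F (e y)) in *. set (a0 := F (e x)) in *.
      set (b := sg (h (exist D y dy) i)) in *. set (b0 := sg (h (exist D x d) i)) in *.
      assert (Rabs b <= 1) by (left; apply sg_bound).
      assert (Rabs a0 <= 1) by (unfold a0; pose proof (rF (e x)); sabs; lra).
      replace (a * b - a0 * b0) with ((a - a0) * b + a0 * (b - b0)) by ring.
      pose proof (Rabs_triang ((a - a0) * b) (a0 * (b - b0))) as Htr.
      rewrite !Rabs_mult in Htr.
      pose proof (Rabs_pos (a - a0)). pose proof (Rabs_pos (b - b0)).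
      pose proof (Rabs_pos b). pose proof (Rabs_pos a0).
      assert (Rabs (a - a0) * Rabs b <= Rabs (a - a0)) by nra.
      assert (Rabs a0 * Rabs (b - b0) <= Rabs (b - b0)) by nra.
      lra. }
  assert (Hext' : forall i, exists g, continuous_R opK g /\ forall x, g (e x) = k i x).
  { intros i. apply (Hext X K opX opK e Hsc). apply kc. exists 1. intros x; left; apply kb2. }
  set (G := fun i => proj1_sig (constructive_indefinite_description _ (Hext' i))).
  assert (HG : forall i, continuous_R opK (G i) /\ forall x, G i (e x) = k i x).
  { intros i. unfold G. destruct constructive_indefinite_description; simpl; auto. }
  assert (Gle : forall i z, Rabs (G i z) <= F z).
  { intros i. apply (ext_le X K opX opK e Hsc (fun z => Rabs (G i z)) F); auto.
    - apply (cont_comp_lip opK (G i) Rabs 1); auto. apply HG. lra.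
      intros a b. rewrite Rmult_1_l. apply Rabs_triang_inv2.
    - intros x. rewrite (proj2 (HG i)). apply kb1. }
  assert (Gq : forall i, Rabs (G i q) < 1).
  { intros i. destruct (Rle_lt_or_eq_dec _ _ (Gle i q)) as [H|H]; [lra|]. exfalso.
    rewrite Fq in H.
    destruct (qU (fun z => 1 - Rabs (G i z))) as [x Hx].
    { apply (cont_comp_lip opK (G i) (fun t => 1 - Rabs t) 1); auto. apply HG. lra.
      intros a b. rewrite Rmult_1_l. pose proof (Rabs_triang_inv2 a b).
      replace (1 - Rabs a - (1 - Rabs b)) with (- (Rabs a - Rabs b)) by ring.
      rewrite Rabs_Ropp. auto. }
    { lra. }
    rewrite (proj2 (HG i)) in Hx. pose proof (kb2 i x). lra. }
  set (y := fun i => sgi (G i q)).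
  assert (sgy : forall i, sg (y i) = G i q) by (intros; apply sg_sgi; auto).
  assert (Happ : forall i eps, 0 < eps -> exists N, opK N /\ N q /\
            forall x, N (e x) -> exists d : D x, Rabs (h (exist D x d) i - y i) < eps).
  { intros i eps epos.
    set (c0 := Rabs (G i q)).
    assert (c0r : 0 <= c0 < 1) by (split; [apply Rabs_pos|apply Gq]).
    set (eta := Rmin ((1 - c0) / 2) (eps * (1 - c0)^2 / 4)).
    assert (etap : 0 < eta).
    { apply Rmin_glb_lt. lra. apply Rmult_lt_0_compat. apply Rmult_lt_0_compat; auto.
      apply pow_lt; lra. lra. }
    assert (eta1 : eta <= (1 - c0) / 2) by apply Rmin_l.
    assert (eta2 : eta <= eps * (1 - c0)^2 / 4) by apply Rmin_r.
    exists (fun z => 1 - eta / 2 < F z /\ Rabs (G i z - G i q) < eta / 2). split.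
    { apply op_inter; auto.
      apply (cont_preimage opK F (fun t => 1 - eta/2 < t)); auto. apply R_open_gt.
      apply (cont_preimage opK (G i) (fun t => Rabs (t - G i q) < eta/2)); auto. apply HG.
      apply R_open_ball. }
    split. { split. lra. rewrite Rminus_eq_0, Rabs_R0. lra. }
    intros x [h1 h2].
    assert (d : D x) by (apply OD, FO; lra). exists d.
    rewrite (proj2 (HG i)), (kD i x d) in h2.
    set (a := h (exist D x d) i) in *.
    assert (Hs : Rabs (sg a - sg (y i)) < eta).
    { rewrite sgy. pose proof (rF (e x)).
      assert (Rabs (sg a - F (e x) * sg a) <= eta / 2).
      { replace (sg a - F (e x) * sg a) with ((1 - F (e x)) * sg a) by ring.
        rewrite Rabs_mult. pose proof (sg_bound a). pose proof (Rabs_pos (sg a)).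
        rewrite Rabs_pos_eq by lra. nra. }
      pose proof (Rabs_triang (sg a - F (e x) * sg a) (F (e x) * sg a - G i q)).
      replace (sg a - F (e x) * sg a + (F (e x) * sg a - G i q)) with (sg a - G i q) in H1 by ring.
      lra. }
    assert (eta1' : eta <= (1 - Rabs (sg (y i))) / 2) by (rewrite sgy; auto).
    pose proof (sg_approx a (y i) eta etap Hs eta1') as Ha.
    rewrite sgy in Ha. fold c0 in Ha.
    assert (2 * eta / (1 - c0) ^ 2 <= eps / 2).
    { apply Rmult_le_reg_r with ((1 - c0)^2). apply pow_lt; lra.
      unfold Rdiv. rewrite Rmult_assoc, Rinv_l. lra. apply pow_nonzero; lra. }
    lra. }
  assert (Happl : forall l eps, 0 < eps -> exists N, opK N /\ N q /\
            forall x, N (e x) -> exists d : D x, forall i, In i l -> Rabs (h (exist D x d) i - y i) < eps).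
  { intros l eps epos. induction l as [|i l [N [oN [Nq HN]]]].
    - exists (fun z => F z <> 0). split.
      { apply (cont_preimage opK F (fun t => t <> 0)); auto. apply R_open_neq. }
      split; [lra|]. intros x Nx. exists (OD x (FO _ Nx)). intros i [].
    - destruct (Happ i eps epos) as [N' [oN' [N'q HN']]].
      exists (fun z => N z /\ N' z). split; [apply op_inter; auto|split; [split; auto|]].
      intros x [Nx N'x]. destruct (HN x Nx) as [d Hd]. destruct (HN' x N'x) as [d' Hd'].
      exists d. intros j [<-|ij]. rewrite (proof_irrelevance _ d d'); auto. auto. }
  assert (yim : exists s, h s = y).
  { apply NNPP; intro ny. destruct (hclosed y ny) as [l [eps [epos Hbox]]].
    destruct (Happl l eps epos) as [N [oN [Nq HN]]].
    destruct (dense_meet X K opX opK e Hsc N q oN Nq) as [x Nx].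
    destruct (HN x Nx) as [d Hd]. apply (Hbox (h (exist D x d))). intros i il. apply Hd; auto.
    exists (exist D x d); auto. }
  destruct yim as [s0 Hs0].
  assert (ne : e (proj1_sig s0) <> q) by (intro E; apply qnX; eauto).
  destruct (HhK X K opX opK e Hsc _ _ ne) as [U [V [oU [oV [Us0 [Vq UV]]]]]].
  destruct (hopen (fun s => U (e (proj1_sig s)))) as [W [oW HW]].
  { intros s Us. exists (fun x => U (e x)). split; [apply Hec; auto|split; auto]. }
  assert (Wy : W y) by (rewrite <- Hs0; apply HW; auto).
  destruct (oW y Wy) as [l [eps [epos Hbox]]].
  destruct (Happl l eps epos) as [N [oN [Nq HN]]].
  destruct (dense_meet X K opX opK e Hsc (fun z => N z /\ V z) q) as [x [Nx Vx]].
  { apply op_inter; auto. } { split; auto. }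
  destruct (HN x Nx) as [d Hd].
  assert (Ux : U (e x)).
  { apply (HW (exist D x d)). apply Hbox. intros i il. apply Hd; auto. }
  apply (UV (e x)); auto.
Qed.


End Dir1.


Lemma dir2 (X K : Type) (opX : (X -> Prop) -> Prop) (opK : (K -> Prop) -> Prop) (e : X -> K) :
  is_topology opX -> hausdorff opX -> completely_regular opX ->
  normal_space opX -> stone_cech opX opK e -> forall p,
  ~ closure opK (fun q => upsilon opX opK e q /\ ~ (exists x, e x = q)) p ->
  lambdaP realcompactP opX opK e p.
Proof.
  intros HtX HhX HcrX HnX Hsc p Hp.
  assert (HtK := HtK X K opX opK e Hsc).
  assert (Hec := He_cont X K opX opK e Hsc).
  unfold closure in Hp. apply not_all_ex_not in Hp as [U HU].
  apply imply_to_and in HU as [oU HU]. apply imply_to_and in HU as [Up HU].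
  destruct (bump X K opX opK e HtX HnX Hsc U p oU Up) as [F [cF [rF [Fp FU]]]].
  assert (cFe : continuous_R opX (fun x => F (e x))) by (apply (cont_compose opX opK e F); auto).
  set (C := fun x => 1/2 < F (e x)).
  exists C. split; [|split].
  - exists (fun x => 2 * Rmax 0 (F (e x) - 1/2)). split; [|split].
    + apply (cont_comp_lip opX (fun x => F (e x)) (fun t => 2 * Rmax 0 (t - 1/2)) 2); auto; [lra|].
      intros a b. unfold Rmax. destruct (Rle_dec 0 (a - 1/2)); destruct (Rle_dec 0 (b - 1/2)); sabs; lra.
    + intros x. pose proof (rF (e x)). unfold Rmax. destruct (Rle_dec 0 (F (e x) - 1/2)); lra.
    + intros x. unfold C, Rmax. destruct (Rle_dec 0 (F (e x) - 1/2)); split; intros; lra.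
  - unfold realcompactP. apply (RC X K opX opK e HtX HhX HcrX Hsc).
    + apply closed_closure; auto.
    + intros q Hq qU. apply NNPP; intro nq.
      assert (Fq : 1/2 <= F q).
      { apply Rnot_lt_le; intro Fl.
        destruct (Hq (fun z => F z < 1/2)) as [k [Fk [x [Dx <-]]]]; auto.
        { apply (cont_preimage opK F (fun t => t < 1/2)); auto. apply R_open_lt. }
        destruct (Dx (fun y => F (e y) < 1/2)) as [c [Fc Cc]]; auto.
        { apply (cont_preimage opX (fun y => F (e y)) (fun t => t < 1/2)); auto. apply R_open_lt. }
        unfold C in Cc; lra. }
      apply HU. exists q. split; [apply FU; lra|split; auto].
  - exists (fun z => 1/2 < F z). split.
    { apply (cont_preimage opK F (fun t => 1/2 < t)); auto. apply R_open_gt. }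
    split; [lra|]. intros k Fk N oN Nk.
    destruct (dense_meet X K opX opK e Hsc (fun z => N z /\ 1/2 < F z) k) as [x [Nx Fx]].
    { apply op_inter; auto. apply (cont_preimage opK F (fun t => 1/2 < t)); auto. apply R_open_gt. }
    { split; auto. }
    exists (e x). split; auto. exists x; split; auto.
Qed.

Theorem proposition4p31 (X K : Type) (opX : (X -> Prop) -> Prop)
  (opK : (K -> Prop) -> Prop) (e : X -> K) :
  is_topology opX -> hausdorff opX -> completely_regular opX ->
  normal_space opX -> stone_cech opX opK e ->
  forall p : K,
    lambdaP realcompactP opX opK e p <->
    ~ closure opK (fun q => upsilon opX opK e q /\ ~ (exists x, e x = q)) p.
Proof.
  intros HtX HhX HcrX HnX Hsc p. split.
  - intros [C [_ [Hrc Hint]]]. apply (dir1 X K opX opK e HtX HnX Hsc C p); auto.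
  - apply dir2; auto.
Qed.
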